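(* Let $X$ be an infinite connected normal Hausdorff space which has no quotient space homeomorphic to $[0,1]$ (i.e. admits no continuous quotient surjection onto $[0,1]$). Then $X$ is punctiform and $X$ is not locally connected.
   Context: A space is punctiform if it contains no connected compact subset with more than one point. A surjection $f\colon X\to Y$ is a quotient map if for every $G\subseteq Y$, $G$ is open in $Y$ iff $f^{-1}(G)$ is open in $X$. *)

(* Defs.v *)
From HB Require Import structures.
From mathcomp Require Import all_boot all_order all_algebra.
From mathcomp Require Import all_classical all_reals all_analysis.
Set Implicit Arguments. Unset Strict Implicit. Unset Printing Implicit Defensive.
Import Order.TTheory GRing.Theory Num.Theory numFieldNormedType.Exports.
Local Open Scope classical_set_scope.
Local Open Scope ring_scope.

Definition open_in_unit_interval (R : realType) (G : set R) : Prop :=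
  exists U : set R, open U /\ G = U `&` `[(0:R), 1]%classic.

Definition quotient_map_onto_unit_interval (X : topologicalType) (R : realType)
  (f : X -> R) : Prop :=
  range f = `[(0:R), 1]%classic /\
  forall G : set R, G `<=` `[(0:R), 1]%classic ->
    (open_in_unit_interval G <-> open (f @^-1` G)).

Definition punctiform (X : topologicalType) : Prop :=
  forall A : set X, compact A -> connected A ->
    forall x y, A x -> A y -> x = y.

Definition locally_connected (X : topologicalType) : Prop :=
  forall (x : X) (U : set X), open U -> U x ->
    exists V : set X, [/\ open V, V x, connected V & V `<=` U].

(* Main.v *)
Require Import Defs.
From HB Require Import structures.
From mathcomp Require Import all_boot all_order all_algebra.
From mathcomp Require Import all_classical all_reals all_analysis.
From mathcomp Require Import lra.
Import numFieldNormedType.Exports.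
Import Order.TTheory GRing.Theory Num.Theory.
Local Open Scope classical_set_scope.
Local Open Scope ring_scope.

Lemma open_lt_pre (R : realType) (X : topologicalType) (f : X -> R) (t : R) :
  continuous f -> open [set y | f y < t].
Proof.
move=> cf.
have -> : [set y | f y < t] = f @^-1` `]-oo, t[.
  by apply/seteqP; split => z /=; rewrite in_itv /=.
apply: (proj1 (continuousP f) cf); exact: itv_open_ends_open.
Qed.

Lemma open_gt_pre (R : realType) (X : topologicalType) (f : X -> R) (t : R) :
  continuous f -> open [set y | t < f y].
Proof.
move=> cf.
have -> : [set y | t < f y] = f @^-1` `]t, +oo[.
  by apply/seteqP; split => z /=; rewrite in_itv /= andbT.
apply: (proj1 (continuousP f) cf); exact: itv_open_ends_open.
Qed.

Lemma sep_lemma (R : realType) (X : topologicalType) (f : X -> R) (t : R) :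
  connected [set: X] -> continuous f -> (exists a, f a < t) ->
  (exists b, t <= f b) ->
  (forall x, f x = t -> exists V, [/\ open V, V x & V `<=` [set y | t <= f y]]) ->
  False.
Proof.
move=> cX cf [a fa] [b fb] H.
have oB : open [set y | t <= f y].
  rewrite openE => y /= ty.
  have [tfy|tfy] : t < f y \/ t = f y.
    by move: ty; rewrite le_eqVlt => /orP[/eqP ->|->]; [right|left].
  - apply: (@filterS _ _ _ [set y | t < f y]); first by move=> z /= /ltW.
    apply: open_nbhs_nbhs; split => //; exact: open_gt_pre.
  - have [V [oV Vy VS]] := H y (esym tfy).
    apply: (filterS VS); apply: open_nbhs_nbhs; split => //.
have := cX [set y | f y < t] _ _ _.
move=> /(_ _) /(_ _) /(_ _) E.
have : [set y | f y < t] = setT.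
  apply: E.
  - by exists a.
  - by exists [set y | f y < t]; [exact: open_lt_pre|rewrite setTI].
  - exists (~` [set y | t <= f y]); first by rewrite -openC setCK.
    rewrite setTI; apply/seteqP; split => z /=.
    + by rewrite ltNge => /negP.
    + by move/negP; rewrite -ltNge.
move=> /(congr1 (fun S => S b)) /= hb.
have : f b < t by rewrite hb.
by rewrite ltNge fb.
Qed.

Lemma lc_side (R : realType) (X : topologicalType) (f : X -> R) (t : R)
  (W : set X) (P : set R) :
  locally_connected X -> continuous f -> open W -> (forall w, W w -> P (f w)) ->
  (forall e : R, 0 < e -> exists s, t - e < s < t /\ ~ P s) ->
  forall x, W x -> f x = t -> exists V, [/\ open V, V x & V `<=` [set y | t <= f y]].
Proof.
move=> lc cf oW WP hP x Wx fx.
have [V [oV Vx cV VW]] := lc x W oW Wx.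
exists V; split => // y Vy /=.
rewrite leNgt; apply/negP => fyt.
have [s [/andP[s1 s2] nPs]] := hP (t - f y) ltac:(by rewrite subr_gt0).
have ci : is_interval (f @` V).
  apply/connected_intervalP; apply: connected_continuous_connected => //.
  exact: continuous_subspaceT.
have [z Vz fzs] : (f @` V) s.
  apply: (ci (f y) (f x)); [by exists y|by exists x|].
  apply/andP; split; [apply: ltW; lra|rewrite fx; exact: ltW].
by apply: nPs; rewrite -fzs; apply: WP; apply: VW.
Qed.

Lemma urys (R : realType) (X : topologicalType) (x y : X) :
  normal_space X -> hausdorff_space X -> x <> y ->
  exists f : X -> R, [/\ continuous f, range f `<=` `[0, 1], f x = 0 & f y = 1].
Proof.
move=> nX hX xy.
have ac := hausdorff_accessible hX.
have c1 : forall z : X, closed [set z] by exact: accessible_closed_set1.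
have H : uniform_separator [set x] [set y].
  apply: (proj1 (@normal_separatorP R X) nX [set x] [set y] (c1 x) (c1 y)).
  by apply/seteqP; split => // z [/= -> ].
have [f [cf rf f0 f1]] := proj1 (@uniform_separatorP X R _ _) H.
exists f; split => //; [apply: f0 | apply: f1]; by eexists.
Qed.

Lemma quot_dir1 (R : realType) (X : topologicalType) (f : X -> R) (G : set R) :
  continuous f -> range f `<=` `[0, 1] -> open_in_unit_interval G ->
  open (f @^-1` G).
Proof.
move=> cf rf [U [oU ->]].
have -> : f @^-1` (U `&` `[(0:R), 1]) = f @^-1` U.
  apply/seteqP; split => z /=; first by case.
  by move=> Uz; split => //; apply: rf; exists z.
exact: (proj1 (continuousP f) cf).
Qed.

Lemma quot_local (R : realType) (G : set R) :
  G `<=` `[(0:R), 1] ->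
  (forall t, G t -> exists2 e : R, 0 < e &
     forall z, `[(0:R), 1]%classic z -> `|z - t| < e -> G z) ->
  open_in_unit_interval G.
Proof.
move=> GS H.
exists [set z | exists t e, [/\ G t, 0 < e,
   (forall w, `[(0:R), 1]%classic w -> `|w - t| < e -> G w) & `|z - t| < e]].
split.
  rewrite openE => z [t [e [Gt e0 Ht zt]]].
  apply/nbhs_ballP; exists (e - `|z - t|) => /=; first by rewrite subr_gt0.
  move=> w; rewrite /ball /= => zw; exists t, e; split => //.
  have : `|z - t| <= `|z - t| by [].
  rewrite ler_norml => /andP[? ?].
  move: zw; rewrite ltr_norml => /andP[? ?].
  rewrite ltr_norml; apply/andP; split; lra.
apply/seteqP; split => z.
  move=> Gz; split; last exact: GS.
  have [e e0 He] := H z Gz; exists z, e; split => //.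
  by rewrite subrr normr0.
by move=> [[t [e [Gt e0 Ht zt]]] z01]; apply: Ht.
Qed.

Lemma range01 (R : realType) (X : topologicalType) (f : X -> R) (A : set X) (x y : X) :
  continuous f -> range f `<=` `[0, 1] -> connected A -> A x -> A y ->
  f x = 0 -> f y = 1 -> `[(0:R), 1] `<=` f @` A.
Proof.
move=> cf rf cA Ax Ay fx fy r r01.
have ci : is_interval (f @` A).
  apply/connected_intervalP; apply: connected_continuous_connected => //.
  exact: continuous_subspaceT.
apply: (ci 0 1); [by exists x|by exists y|].
move: r01; rewrite /= in_itv. by [].
Qed.

Theorem mainTheorem6 (R : realType) (X : topologicalType) :
  infinite_set [set: X] ->
  connected [set: X] ->
  normal_space X ->
  hausdorff_space X ->
  ~ (exists f : X -> R, quotient_map_onto_unit_interval f) ->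
  punctiform X /\ ~ locally_connected X.
Proof.
move=> iX cX nX hX nq; split.
- move=> A cA coA x y Ax Ay; apply: contrapT => xy.
  have [f [cf rf fx fy]] := @urys R X x y nX hX xy.
  have fA := @range01 R X f A x y cf rf coA Ax Ay fx fy.
  apply: nq; exists f; split.
    apply/seteqP; split; first exact: rf.
    by move=> r /fA [a _ <-]; exists a.
  move=> G GS; split; first exact: quot_dir1.
  move=> oG.
  exists (~` (f @` (A `\` f @^-1` G))); split.
    rewrite openC; apply: compact_closed; first exact: Rhausdorff.
    apply: continuous_compact; first exact: continuous_subspaceT.
    by rewrite setDE; apply: compact_closedI => //; rewrite -openC setCK.
  apply/seteqP; split => r.
    move=> Gr; split; last exact: GS.
    by move=> [a [Aa nG] far]; apply: nG; rewrite /preimage /= far.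
  move=> [nr r01]; have [a Aa far] := fA r r01.
  apply: contrapT => nGr; apply: nr; exists a => //; split => //.
  by rewrite /preimage /= far.
- move=> lc.
  have [x0 _] := infinite_setN0 iX.
  have [y0 [_ /= yx]] := infinite_setN0 (infinite_setD iX (finite_set1 x0)).
  have [f [cf rf fx fy]] := @urys R X x0 y0 nX hX (fun e => yx (esym e)).
  have fA := @range01 R X f setT x0 y0 cf rf cX I I fx fy.
  apply: nq; exists f; split.
    apply/seteqP; split; first exact: rf.
    by move=> r /fA [a _ <-]; exists a.
  move=> G GS; split; first exact: quot_dir1.
  move=> oG; apply: quot_local => // t Gt.
  apply: contrapT => H.
  have H' : forall e : R, 0 < e -> exists z, [/\ `[(0:R), 1]%classic z, `|z - t| < e & ~ G z].
    move=> e e0; apply: contrapT => nz; apply: H; exists e => // z z01 zt.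
    by apply: contrapT => nG; apply: nz; exists z.
  have t01 := GS t Gt; move: (t01) => /=; rewrite in_itv /= => /andP[t0 t1].
  have [below|nbelow] := pselect (forall e : R, 0 < e ->
      exists s, t - e < s < t /\ 0 <= s /\ ~ G s).
    apply: (@sep_lemma R X f t cX cf).
    + exists x0; rewrite fx; have [s [/andP[_ st] [s0 _]]] := below 1 ltr01.
      exact: le_lt_trans s0 st.
    + by exists y0; rewrite fy.
    + move=> x fxt; apply: (@lc_side R X f t (f @^-1` G) G lc cf oG) => //.
        move=> e e0; have [s [? [_ ?]]] := below e e0; by exists s.
      by rewrite /preimage /= fxt.
  have [e0 e00 He0] : exists2 e0 : R, 0 < e0 &
      forall s, t - e0 < s < t -> 0 <= s -> G s.
    apply: contrapT => K; apply: nbelow => e e0; apply: contrapT => K2.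
    apply: K; exists e => // s st s0; apply: contrapT => nG; apply: K2.
    by exists s.
  have above : forall e : R, 0 < e -> exists s, t < s < t + e /\ s <= 1 /\ ~ G s.
    move=> e e_gt0.
    have [z [z01 zt nGz]] := H' (Order.min e e0) ltac:(by rewrite lt_min e_gt0 e00).
    move: zt; rewrite lt_min => /andP[zte zte0].
    move: z01 => /=; rewrite in_itv /= => /andP[z0 z1].
    move: zte zte0; rewrite !ltr_norml => /andP[? ?] /andP[? ?].
    have [zt|zt|zt] := ltgtP z t.
    + by exfalso; apply: nGz; apply: He0 => //; apply/andP; split => //; lra.
    + exists z; split; [apply/andP; split => //; lra|split => //].
    + by exfalso; apply: nGz; rewrite zt.
  have cg : continuous (fun x => - f x) by move=> x; apply: continuousN; exact: cf.
  apply: (@sep_lemma R X (fun x => - f x) (- t) cX cg).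
  + exists y0; rewrite fy; have [s [/andP[ts _] [s1 _]]] := above 1 ltr01.
    rewrite ltrN2; exact: lt_le_trans ts s1.
  + by exists x0; rewrite fx oppr0 oppr_le0.
  + move=> x fxt.
    apply: (@lc_side R X (fun x => - f x) (- t) (f @^-1` G) (fun r => G (- r))
      lc cg oG) => //.
      by move=> w; rewrite /preimage /= opprK.
      move=> e e_gt0; have [s [/andP[? ?] [_ ?]]] := above e e_gt0.
      exists (- s); split; [apply/andP; split; lra|by rewrite opprK].
    by rewrite /preimage /=; move: fxt => /eqP; rewrite eqr_opp => /eqP ->.
Qed.
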